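(* For an abelian group $A$, the following are equivalent: (i) $A$ is finitely generated; (ii) $A$ is SB-generated; (iii) $A$ has uncountable cofinality.
   Context: A subset of a group $G$ is strongly bounded if it has finite diameter in every left-invariant metric on $G$; a group is SB-generated if it is generated by a strongly bounded subset. A group has uncountable cofinality if it cannot be written as the union of a strictly increasing sequence $H_1\subsetneq H_2\subsetneq\cdots$ of subgroups. *)

(* Defs.v *)
From mathcomp Require Import all_boot all_algebra.
From Stdlib Require Import Reals.
Set Implicit Arguments. Unset Strict Implicit. Unset Printing Implicit Defensive.
Import GRing.Theory.
Local Open Scope ring_scope.

Section Defs.
Variable G : zmodType.

Definition is_subgroup (H : G -> Prop) : Prop :=
  H 0 /\ (forall x y, H x -> H y -> H (x + y)) /\ (forall x, H x -> H (- x)).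

Definition generates (S : G -> Prop) : Prop :=
  forall H : G -> Prop, is_subgroup H -> (forall x, S x -> H x) -> forall x, H x.

Definition left_invariant_metric (d : G -> G -> R) : Prop :=
  (forall x y, d x y = R0 <-> x = y) /\
  (forall x y, d x y = d y x) /\
  (forall x y z, Rle (d x z) (Rplus (d x y) (d y z))) /\
  (forall g x y, d (g + x) (g + y) = d x y).

Definition strongly_bounded (S : G -> Prop) : Prop :=
  forall d : G -> G -> R, left_invariant_metric d ->
    exists M : R, forall x y, S x -> S y -> Rle (d x y) M.

Definition finitely_generated : Prop :=
  exists s : seq G, generates (fun x => x \in s).

Definition SB_generated : Prop :=
  exists S : G -> Prop, strongly_bounded S /\ generates S.

Definition uncountable_cofinality : Prop :=
  ~ exists H : nat -> (G -> Prop),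
      (forall n, is_subgroup (H n)) /\
      (forall n, (forall x, H n x -> H n.+1 x) /\ exists x, H n.+1 x /\ ~ H n x) /\
      (forall x, exists n, H n x).

End Defs.

(* Main.v *)
Require Import Defs.
From mathcomp Require Import all_boot all_algebra.
From mathcomp Require Import boolp classical_sets.
From Stdlib Require Import Reals Lra Classical ClassicalEpsilon.
Set Implicit Arguments. Unset Strict Implicit. Unset Printing Implicit Defensive.
Import GRing.Theory.
Local Open Scope ring_scope.

Section Alg.
Variable A : zmodType.
Implicit Types (L K : A -> Prop) (s t : seq A).

Lemma sg0 K : is_subgroup K -> K 0. Proof. by case. Qed.
Lemma sgD K x y : is_subgroup K -> K x -> K y -> K (x + y).
Proof. by case=> _ [H _]; apply: H. Qed.
Lemma sgN K x : is_subgroup K -> K x -> K (- x).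
Proof. by case=> _ [_ H]; apply: H. Qed.
Lemma sgB K x y : is_subgroup K -> K x -> K y -> K (x - y).
Proof. by move=> hK hx hy; apply: sgD => //; apply: sgN. Qed.
Lemma sgNE K x : is_subgroup K -> K (- x) -> K x.
Proof. by move=> hK /(sgN hK); rewrite opprK. Qed.
Lemma sgn K x n : is_subgroup K -> K x -> K (x *+ n).
Proof.
move=> hK hx; elim: n => [|n IH]; first by rewrite mulr0n; apply: sg0.
by rewrite mulrSr; apply: sgD.
Qed.
Lemma sgz K x j : is_subgroup K -> K x -> K (x *~ j).
Proof.
move=> hK hx; case: j => n; first by rewrite -pmulrn; apply: (sgn _ hK).
by rewrite NegzE mulrNz -pmulrn; apply: (sgN hK); apply: sgn.
Qed.
Lemma sgBr K x y : is_subgroup K -> K (x - y) -> K y -> K x.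
Proof. by move=> hK h1 h2; have := sgD hK h1 h2; rewrite subrK. Qed.

Lemma zcase x j : exists k : nat, forall K, is_subgroup K -> (K (x *~ j) <-> K (x *+ k)).
Proof.
case: j => n; first by exists n => K hK; rewrite -pmulrn.
exists n.+1 => K hK; rewrite NegzE mulrNz -pmulrn; split; first exact: sgNE.
exact: sgN.
Qed.

Fixpoint spanL L s : A -> Prop :=
  match s with
  | [::] => L
  | y :: s' => fun x => exists j : int, spanL L s' (x - y *~ j)
  end.

Lemma spanL_sg L s : is_subgroup L -> is_subgroup (spanL L s).
Proof.
move=> hL; elim: s => [|y s IH] //=; split; [|split].
- by exists 0; rewrite mulr0z subr0; apply: sg0.
- move=> x z [j1 h1] [j2 h2]; exists (j1 + j2).
  have := sgD IH h1 h2; congr (spanL L s _).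
  by rewrite mulrzDr opprD addrACA.
- move=> x [j h]; exists (- j); have := sgN IH h; congr (spanL L s _).
  by rewrite mulrNz opprB opprK addrC.
Qed.

Lemma spanL_base L s x : L x -> spanL L s x.
Proof. elim: s x => [|y s IH] x //= hx; exists 0; rewrite mulr0z subr0; exact: IH. Qed.

Lemma spanL_cons L s y x : spanL L s x -> spanL L (y :: s) x.
Proof. by move=> h; exists 0; rewrite mulr0z subr0. Qed.

Lemma spanL_mono L L' s x : (forall z, L z -> L' z) -> spanL L s x -> spanL L' s x.
Proof.
move=> hL; elim: s x => [|y s IH] x /=; first exact: hL.
by case=> j h; exists j; apply: IH.
Qed.

Lemma spanL_mem L s y : is_subgroup L -> y \in s -> spanL L s y.
Proof.
move=> hL; elim: s => [|z s IH] //=; rewrite inE => /orP [/eqP ->|h].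
  by exists 1; rewrite subrr; apply: sg0; apply: spanL_sg.
by exists 0; rewrite mulr0z subr0; apply: IH.
Qed.

Lemma spanL_cat L s t x : spanL L (s ++ t) x <-> spanL (spanL L t) s x.
Proof.
elim: s x => [|y s IH] x //=; split; case=> j h; exists j; exact/IH.
Qed.

Lemma spanL_swap L x s z : spanL (spanL L [:: x]) s z -> exists j, spanL L s (z - x *~ j).
Proof.
elim: s z => [|y s IH] z /=; first by [].
case=> j' /IH [j h]; exists j; exists j'.
by move: h; congr (spanL L s _); rewrite addrAC.
Qed.

Lemma spanL_hom L s z M : spanL L s z ->
  spanL (fun w => exists v, L v /\ w = v *+ M) (map (fun y => y *+ M) s) (z *+ M).
Proof.
elim: s z => [|y s IH] z /=; first by move=> h; exists z.
case=> j /IH h; exists j; move: h; congr (spanL _ _ _).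
by rewrite mulrnBl !pmulrn mulrzAC.
Qed.

Lemma spanL_in L s H : is_subgroup H -> (forall x, L x -> H x) -> (forall y, y \in s -> H y) ->
  forall x, spanL L s x -> H x.
Proof.
move=> hH hL; elim: s => [|y s IH] hs x //=; first exact: hL.
case=> j h; apply: (sgBr hH (y := y *~ j)).
  by apply: IH => // z zs; apply: hs; rewrite inE zs orbT.
by apply: sgz => //; apply: hs; rewrite inE eqxx.
Qed.

Definition pA (p : nat) : A -> Prop := fun y => exists z, y = z *+ p.

Lemma pA_sg p : is_subgroup (pA p).
Proof.
split; first by exists 0; rewrite mul0rn.
split; first by move=> x y [a ->] [b ->]; exists (a + b); rewrite mulrnDl.
by move=> x [a ->]; exists (- a); rewrite mulNrn.
Qed.

Definition cl (p : nat) L : A -> Prop := fun x => exists j : nat, ~~ (dvdn p (j)) /\ L (x *+ j).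

Definition okp (p : nat) := p = 0%N \/ prime p.

Lemma okp1 p : okp p -> ~~ (dvdn p (1)).
Proof. by case=> [->|hp] //; rewrite Euclid_dvd1. Qed.

Lemma okpM p a b : okp p -> ~~ (dvdn p (a)) -> ~~ (dvdn p (b)) -> ~~ (dvdn p (muln a b)).
Proof.
case=> [->|hp]; last by rewrite Euclid_dvdM // => /negbTE -> /negbTE ->.
by rewrite !dvd0n muln_eq0 => /negbTE -> /negbTE ->.
Qed.

Lemma cl_sg p L : okp p -> is_subgroup L -> is_subgroup (cl p L).
Proof.
move=> hp hL; split; first by exists 1%N; split; [exact: okp1|rewrite mulr1n; apply: sg0].
split.
  move=> x y [j [hj h1]] [k [hk h2]]; exists (muln j k); split; first exact: okpM.
  rewrite mulrnDl mulrnA; apply: sgD => //; first exact: sgn.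
  by rewrite mulnC mulrnA; apply: sgn.
by move=> x [j [hj h]]; exists j; split => //; rewrite mulNrn; apply: sgN.
Qed.

Lemma cl_base p L x : okp p -> L x -> cl p L x.
Proof. by move=> hp h; exists 1%N; split; [exact: okp1|rewrite mulr1n]. Qed.

Lemma cl_mono p L L' x : (forall z, L z -> L' z) -> cl p L x -> cl p L' x.
Proof. by move=> hL [j [hj h]]; exists j; split => //; apply: hL. Qed.


Fixpoint fs (next : seq A -> A) (n : nat) : seq A :=
  match n with 0 => [::] | n'.+1 => next (fs next n') :: fs next n' end.

Lemma spanL_bigcup (F : set (A -> Prop)) s z :
  spanL (\bigcup_(X in F) X)%classic s z -> exists X, F X /\ (exists y, X y) /\ spanL X s z.
Proof.
elim: s z => [|y s IH] z /=.
  by case=> X FX Xz; exists X; split => //; split => //; exists z.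
case=> j /IH [X [FX [hne h]]]; exists X; split => //; split => //; by exists j.
Qed.

Lemma LV p : okp p -> uncountable_cofinality A ->
  exists s, forall a, cl p (spanL (pA p) s) a.
Proof.
move=> hp UC; apply: NNPP => Hno.
have Hnext : forall s, exists a, ~ cl p (spanL (pA p) s) a.
  move=> s; apply: NNPP => H; apply: Hno; exists s => a; apply: NNPP => Ha.
  by apply: H; exists a.
pose next s := proj1_sig (constructive_indefinite_description _ (Hnext s)).
have Hn : forall s, ~ cl p (spanL (pA p) s) (next s).
  by move=> s; rewrite /next; case: constructive_indefinite_description.
pose e n := next (fs next n).
pose Fam (K : A -> Prop) := [/\ is_subgroup K, (forall x, pA p x -> K x) &
   forall n, ~ cl p (spanL K (fs next n)) (e n)].
pose P (K : A -> Prop) := Fam K \/ (forall x, ~ K x).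
have PFam : forall K y, P K -> K y -> Fam K by move=> K y [//|h] /h.
have FamB : Fam (pA p) by split; [exact: pA_sg | by move=> x | move=> n; apply: Hn].
have [K [PK Kmax]] : exists K, P K /\ (forall B, (K `<` B)%classic -> ~ P B).
  apply: Zorn_bigcup => F FP Ftot.
  case: (classic (exists X, F X /\ exists y, X y)); last first.
    move=> hne; right => x [X FX Xx]; apply: hne; exists X; split => //; by exists x.
  move=> [X0 [FX0 [y0 X0y0]]]; left.
  have FamX0 := PFam _ _ (FP _ FX0) X0y0.
  case: FamX0 => sg0' pA0 _.
  split.
  - split; first by exists X0 => //; apply: sg0.
    split.
      move=> x y [X1 FX1 X1x] [X2 FX2 X2y].
      have [sg1 _ _] := PFam _ _ (FP _ FX1) X1x.
      have [sg2 _ _] := PFam _ _ (FP _ FX2) X2y.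
      case: (Ftot _ _ FX1 FX2) => hs.
        by exists X2 => //; apply: sgD => //; apply: hs.
      by exists X1 => //; apply: sgD => //; apply: hs.
    move=> x [X1 FX1 X1x].
    have [sg1 _ _] := PFam _ _ (FP _ FX1) X1x.
    by exists X1 => //; apply: sgN.
  - by move=> x hx; exists X0 => //; apply: pA0.
  - move=> n [j [hj /spanL_bigcup [X [FX [[y Xy] h]]]]].
    have [_ _ hX] := PFam _ _ (FP _ FX) Xy.
    by apply: (hX n); exists j.
have FamK : Fam K.
  case: PK => // hK; exfalso; apply: (Kmax (pA p)); last by left.
  split; first by move=> x /hK.
  by move=> h; apply: (hK 0); apply: h; apply: sg0; apply: pA_sg.
case: FamK => sgK pAK famK.
apply: UC; exists (fun n => cl p (spanL K (fs next n))); split.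
  by move=> n; apply: cl_sg => //; apply: spanL_sg.
split.
  move=> n; split.
    by move=> x; apply: cl_mono => z; apply: spanL_cons.
  exists (e n); split; last exact: famK.
  apply: cl_base => //; apply: spanL_mem => //.
  by rewrite /= inE eqxx.
move=> x.
pose K' := spanL K [:: x].
have sgK' : is_subgroup K' by apply: spanL_sg.
have KK' : forall z, K z -> K' z by move=> z; apply: spanL_base.
have xK' : K' x by apply: spanL_mem; rewrite ?inE ?eqxx.
case: (classic (Fam K')) => hF.
  have : ~ (K `<` K')%classic by move=> hp'; apply: (Kmax _ hp'); left.
  move=> hnp; have xK : K x.
    apply: NNPP => nx; apply: hnp; split; first exact: KK'.
    by move=> h; apply: nx; apply: h.
  by exists 0%N; apply: cl_base.
have [n hn] : exists n, cl p (spanL K' (fs next n)) (e n).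
  apply: NNPP => hno; apply: hF; split => //.
    by move=> z /pAK; apply: KK'.
  by move=> n hn; apply: hno; exists n.
case: hn => i [hi /spanL_swap [j hj]].
set S := spanL K (fs next n) in hj.
have sgS : is_subgroup S by apply: spanL_sg.
pose S' := spanL K (e n :: fs next n).
have sgS' : is_subgroup S' by apply: spanL_sg.
have SS' : forall z, S z -> S' z by move=> z; apply: spanL_cons.
have eS' : S' (e n) by apply: spanL_mem; rewrite ?inE ?eqxx.
have xjS' : S' (x *~ j).
  have := sgB sgS' (sgn i sgS' eS') (SS' _ hj).
  by rewrite opprB addrC subrK.
have [k hk] := zcase x j.
case: (boolP (dvdn p k)) => hpk; last first.
  by exists n.+1; exists k; split => //; apply/(hk _ sgS').
exfalso; apply: (famK n); exists i; split => //.
have xjS : S (x *~ j).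
  apply/(hk _ sgS); apply: spanL_base; apply: pAK.
  by exists (x *+ (k %/ p)); rewrite -mulrnA divnK.
have := sgD sgS hj xjS; by rewrite subrK.
Qed.


Fixpoint Nseq (g : nat -> nat) n := match n with 0 => 1%N | n'.+1 => muln (g (Nseq g n')) n'.+1 end.

Lemma bound (B : A -> Prop) : is_subgroup B -> uncountable_cofinality A ->
  (forall a, exists j, (0 < j)%nat /\ B (a *+ j)) -> exists N, (0 < N)%nat /\ forall a, B (a *+ N).
Proof.
move=> sgB UC tor; apply: NNPP => Hno.
have Hw : forall N, exists a, (0 < N)%nat -> ~ B (a *+ N).
  move=> N; case: (posnP N) => [->|Np]; first by exists 0.
  apply: NNPP => H; apply: Hno; exists N; split => // a; apply: NNPP => nb.
  by apply: H; exists a.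
pose w N := proj1_sig (constructive_indefinite_description _ (Hw N)).
have hw : forall N, (0 < N)%nat -> ~ B (w N *+ N).
  by move=> N; rewrite /w; case: constructive_indefinite_description.
pose m a := proj1_sig (constructive_indefinite_description _ (tor a)).
have hm : forall a, (0 < m a)%nat /\ B (a *+ m a).
  by move=> a; rewrite /m; case: constructive_indefinite_description.
pose g N := muln N (m (w N)).
have Npos : forall n, (0 < Nseq g n)%nat.
  elim=> [|n IH] //=; rewrite muln_gt0 andbT /g muln_gt0 IH /=; exact: (hm _).1.
apply: UC; exists (fun n x => B (x *+ Nseq g n)); split.
  move=> n; split; first by rewrite mul0rn; apply: sg0.
  split; first by move=> x y hx hy; rewrite mulrnDl; apply: sgD.
  by move=> x hx; rewrite mulNrn; apply: sgN.
split.
  move=> n; split.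
    by move=> x hx /=; rewrite /g -mulnA mulrnA; apply: (sgn _ sgB).
  exists (w (Nseq g n)); split; last exact: hw.
  rewrite /= /g (mulnC (Nseq g n)) !mulrnA; apply: (sgn _ sgB); apply: (sgn _ sgB); exact: (hm _).2.
move=> x; have [mp mB] := hm x.
exists (m x); move: mp mB; case: (m x) => [//|k] _ hB /=.
by rewrite mulnC mulrnA; apply: (sgn _ sgB).
Qed.

Lemma step2 p : prime p -> uncountable_cofinality A -> exists s, forall a, spanL (pA p) s a.
Proof.
move=> pp UC; have [s hs] := LV (or_intror pp) UC; exists s => a.
have [j [hj h]] := hs a.
have sgL : is_subgroup (spanL (pA p) s) by apply: spanL_sg; apply: pA_sg.
have [u _ hu] := Bezoutl j (prime_gt0 pp).
have cop : coprime p j by rewrite prime_coprime.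
rewrite (eqP cop) in hu.
have e1 : a *+ (1 + u * j)%nat = a + (a *+ j) *+ u by rewrite mulrnDr mulr1n mulnC mulrnA.
have e2 : a *+ (1 + u * j)%nat = (a *+ (divn (1 + u * j)%nat p)) *+ p by rewrite -mulrnA divnK.
have : spanL (pA p) s (a + (a *+ j) *+ u).
  by rewrite -e1 e2; apply: spanL_base; eexists.
move=> h2; have := sgB sgL h2 (sgn u sgL h); by rewrite addrK.
Qed.

Lemma step3 : uncountable_cofinality A -> forall N, (0 < N)%nat -> exists t, forall a, spanL (pA N) t a.
Proof.
move=> UC; elim/ltn_ind => N IH Np.
case: (ltngtP N 1) => [h|hN|->]; first by case: N {IH} h Np.
  pose p := pdiv N.
  have pp : prime p by apply: pdiv_prime.
  have pN : dvdn p N by apply: pdiv_dvd.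
  pose M := divn N p.
  have NM : N = muln M p by rewrite divnK.
  have Mpos : (0 < M)%nat by rewrite divn_gt0 ?prime_gt0 // dvdn_leq.
  have MN : (M < N)%nat by rewrite ltn_Pdiv ?prime_gt1.
  have [tM htM] := IH M MN Mpos.
  have [tp htp] := step2 pp UC.
  exists (tM ++ map (fun y => y *+ M) tp) => a.
  apply/spanL_cat; apply: (spanL_mono _ (htM a)) => z [v ->].
  apply: spanL_mono (spanL_hom M (htp v)) => w [v' [[u ->] ->]].
  by exists u; rewrite -mulrnA NM mulnC.
by exists [::] => a; exists a; rewrite mulr1n.
Qed.

Lemma iii_i : uncountable_cofinality A -> finitely_generated A.
Proof.
move=> UC; have [s hs] := LV (or_introl erefl) UC.
pose B := spanL (pA 0) s.
have sgB : is_subgroup B by apply: spanL_sg; apply: pA_sg.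
have [N [Np hN]] : exists N, (0 < N)%nat /\ forall a, B (a *+ N).
  apply: bound => // a; have [j [hj h]] := hs a; exists j; split => //.
  by rewrite lt0n; move: hj; rewrite dvd0n.
have [t ht] := step3 UC Np.
exists (t ++ s) => H sgH hts x.
apply: (spanL_in (L := pA 0) (s := t ++ s)) => //.
  by move=> z [v ->]; rewrite mulr0n; apply: sg0.
apply/spanL_cat; apply: spanL_mono (ht x) => z [v ->]; exact: hN.
Qed.


Fixpoint mx (f : A -> R) (l : seq A) : R :=
  match l with [::] => R0 | y :: l' => Rmax (f y) (mx f l') end.

Lemma mx_ge f l y : y \in l -> Rle (f y) (mx f l).
Proof.
elim: l => [|z l IH] //=; rewrite inE => /orP [/eqP ->|h]; first exact: Rmax_l.
apply: Rle_trans (IH h) _; exact: Rmax_r.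
Qed.

Lemma i_ii : finitely_generated A -> SB_generated A.
Proof.
case=> s hs; exists (fun x => x \in s); split => //.
move=> d _; exists (mx (fun x => mx (fun y => d x y) s) s) => x y xs ys.
apply: Rle_trans (mx_ge (fun y => d x y) ys) _.
exact: (mx_ge (fun x => mx (fun y => d x y) s) xs).
Qed.

Lemma ii_iii : SB_generated A -> uncountable_cofinality A.
Proof.
move=> [S [SB gen]] [H [Hsg [Hinc Hcov]]].
have Hmono : forall n k, (n <= k)%nat -> forall x, H n x -> H k x.
  move=> n k /subnK <-; elim: (k - n)%nat => [|i IH] x hx //.
  by rewrite addSn; apply: (Hinc _).1; apply: IH.
have exP : forall x, exists n, (fun n => `[< H n x >]) n.
  by move=> x; have [n hn] := Hcov x; exists n; apply/asboolP.
pose m x := ex_minn (exP x).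
have hm1 : forall x, H (m x) x.
  by move=> x; rewrite /m; case: ex_minnP => n /asboolP.
have hm2 : forall x n, H n x -> (m x <= n)%nat.
  by move=> x n hn; rewrite /m; case: ex_minnP => k _ hk; apply: hk; apply/asboolP.
have m0 : m 0 = 0%nat by apply/eqP; rewrite -leqn0; apply: hm2; apply: sg0.
have mN : forall z, m (- z) = m z.
  move=> z; apply/eqP; rewrite eqn_leq; apply/andP; split; apply: hm2.
    by apply: sgN => //; apply: hm1.
  by rewrite -(opprK z); apply: sgN => //; rewrite opprK; apply: hm1.
have mD : forall a b : A, leq (m (a + b)) (addn (m a) (m b)).
  move=> a b; apply: hm2; apply: sgD => //; apply: Hmono (hm1 _).
    exact: leq_addr.
  exact: leq_addl.
pose ind (x : A) : R := if x == 0 then IZR 0 else IZR 1.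
have ind0 : forall x, Rle (IZR 0) (ind x) by move=> x; rewrite /ind; case: (x == 0); lra.
have indD : forall a b, Rle (ind (a + b)) (Rplus (ind a) (ind b)).
  move=> a b; rewrite /ind; case: (eqVneq a 0) => [->|ha]; case: (eqVneq b 0) => [->|hb];
    rewrite ?addr0 ?eqxx; try lra; case: (_ == 0); lra.
pose d x y := Rplus (INR (m (y - x))) (ind (y - x)).
have dmet : left_invariant_metric d.
  split; [|split; [|split]].
  - move=> x y; split; last by move=> ->; rewrite /d subrr m0 /ind eqxx /=; lra.
    rewrite /d /ind; case: (eqVneq (y - x) 0) => [/eqP|h].
      by rewrite subr_eq0 => /eqP ->.
    move=> hE; exfalso; move: hE; set t := INR _; have : Rle (IZR 0) t by apply: pos_INR.
    change R0 with (IZR 0); lra.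
  - move=> x y; rewrite /d -opprB mN /ind oppr_eq0 //.
  - move=> x y z; rewrite /d.
    have e : z - x = (y - x) + (z - y) by rewrite [RHS]addrC addrA subrK.
    rewrite e.
    have h1 := indD (y - x) (z - y).
    have h2 : Rle (INR (m ((y - x) + (z - y)))) (Rplus (INR (m (y - x))) (INR (m (z - y)))).
      rewrite -plus_INR; apply: le_INR; apply/leP; exact: mD.
    move: h1 h2; set u1 := INR (m (y - x)); set u2 := INR (m (z - y)); set u3 := INR (m (y - x + (z - y))).
    set i1 := ind (y - x); set i2 := ind (z - y); set i3 := ind (y - x + (z - y)); lra.
  - by move=> g x y; rewrite /d opprD addrACA subrr add0r.
have [M hM] := SB d dmet.
case: (classic (exists s0 : A, S s0)) => [[s0 Ss0]|noS]; last first.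
  have allH0 : forall x, H 0%nat x by apply: gen => // x Sx; exfalso; apply: noS; exists x.
  by have [_ [x [_ nx]]] := Hinc 0%nat; apply: nx.
have [N hN] := INR_unbounded M.
have HS : forall x, S x -> H (N + m s0)%nat x.
  move=> x Sx.
  have hx := hM _ _ Ss0 Sx.
  have lt : ltn (m (x - s0)) N.
    apply/ltP; apply: INR_lt; have h0 := ind0 (x - s0); rewrite /d in hx; move: hx h0.
    set u := INR (m (x - s0)); set v := ind (x - s0); lra.
  rewrite -(subrK s0 x); apply: sgD => //.
    by apply: Hmono (hm1 _); apply: leq_trans (ltnW lt) (leq_addr _ _).
  by apply: Hmono (hm1 _); exact: leq_addl.
have allH : forall x, H (N + m s0)%nat x by apply: gen.
by have [_ [x [_ nx]]] := Hinc (N + m s0)%nat; apply: nx.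
Qed.

End Alg.

Theorem proposition2p7 (A : zmodType) :
  (finitely_generated A <-> SB_generated A) /\
  (SB_generated A <-> uncountable_cofinality A).
Proof.
split; split.
- exact: i_ii.
- by move=> h; apply: iii_i; apply: ii_iii.
- exact: ii_iii.
- by move=> h; apply: i_ii; apply: iii_i.
Qed.
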